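(* For all $n \ge 0$, $$d_0(W_n1,\,1W_n) \;=\; \frac12 + \frac{1}{2\cdot 3^n} \;=\; d_0(1W_n,\,W_n1).$$
   Context: Words are finite strings over $\{0,1\}$; for a word $\alpha$, $\alpha(i)$ denotes its $i$-th letter and $|\alpha|$ its length. Define $W_0 = 0$ and $W_{m+1} = W_m W_m 1 W_m$ for $m\ge 0$. For words $\alpha,\beta$ with $|\alpha|=|\beta|$ and $\alpha$ containing at least one $0$, the modified $0$-Hamming distance is $$d_0(\alpha,\beta) = \frac{|\{i : \alpha(i)=0 \text{ and } \beta(i)=1\}|}{|\{i : \alpha(i)=0\}|}.$$ Here $W_n1$ and $1W_n$ denote concatenations with the one-letter word $1$. *)

(* Defs.v *)
(* Words over {0,1} are encoded as seq bool: false = 0, true = 1. *)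
From mathcomp Require Import all_boot all_order all_algebra.
Set Implicit Arguments. Unset Strict Implicit. Unset Printing Implicit Defensive.
Import GRing.Theory Num.Theory.
Local Open Scope ring_scope.

Fixpoint W (m : nat) : seq bool :=
  match m with
  | 0 => [:: false]
  | m'.+1 => W m' ++ W m' ++ [:: true] ++ W m'
  end.

(* modified 0-Hamming distance (meaningful when size a = size b and a has a 0):
   #{i | a(i)=0 /\ b(i)=1} / #{i | a(i)=0} *)
Definition d0 (a b : seq bool) : rat :=
  (count (fun i => ~~ nth false a i && nth false b i) (iota 0 (size a)))%:R
  / (count (fun i => ~~ nth false a i) (iota 0 (size a)))%:R.

(* Main.v *)
Require Import Defs.
From mathcomp Require Import all_boot all_order all_algebra.
From mathcomp Require Import ring lra zify.
Import GRing.Theory Num.Theory.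
Local Open Scope ring_scope.

Lemma cnt_zip (a b : seq bool) (F : bool -> bool -> bool) :
  size a = size b ->
  count (fun i => F (nth false a i) (nth false b i)) (iota 0 (size a)) =
  count (fun p => F p.1 p.2) (zip a b).
Proof.
move=> hs.
rewrite -[in RHS](mkseq_nth (false,false) (zip a b)) /mkseq count_map size_zip hs minnn.
rewrite -hs; apply: eq_in_count => i _ /=.
by rewrite /preim /= nth_zip.
Qed.

Lemma cnt_neg (a : seq bool) :
  count (fun i => ~~ nth false a i) (iota 0 (size a)) = count negb a.
Proof.
by rewrite -[in RHS](mkseq_nth false a) /mkseq count_map.
Qed.

Fixpoint g (r : bool -> bool -> bool) (a : bool) (s : seq bool) : nat :=
  match s with [::] => 0%N | x :: t => (r a x + g r x t)%N end.

Lemma gcat r a s1 s2 : g r a (s1 ++ s2) = (g r a s1 + g r (last a s1) s2)%N.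
Proof. by elim: s1 a => [|x t IH] a //=; rewrite IH addnA. Qed.

Lemma num1 a s : count (fun p : bool * bool => ~~ p.1 && p.2) (zip (rcons s true) (a :: s))
  = g (fun a x => a && ~~ x) a s.
Proof. elim: s a => [|x t IH] a /=; first by []. by rewrite IH andbC. Qed.

Lemma num2 a s : count (fun p : bool * bool => ~~ p.1 && p.2) (zip (a :: s) (rcons s true))
  = (g (fun a x => ~~ a && x) a s + ~~ last a s)%N.
Proof. elim: s a => [|x t IH] a /=; first by rewrite andbT addn0. by rewrite IH addnA. Qed.

Lemma W_cons n : exists t, W n = false :: t.
Proof. elim: n => [|n [t IH]] /=; first by exists [::]. by rewrite IH; eexists. Qed.

Lemma W_last n a : last a (W n) = false.
Proof. by elim: n a => [|n IH] a //=; rewrite !last_cat /= IH. Qed.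

Lemma W_zeros n : count negb (W n) = (3 ^ n)%N.
Proof. elim: n => [|n IH] //=; rewrite !count_cat /= IH expnS; lia. Qed.

Lemma W_gW (r : bool -> bool -> bool) n a : r false false = false ->
  g r a (W n) = (r a false + g r false (W n))%N.
Proof. by move=> h3; have [t ht] := W_cons n; rewrite ht /= h3. Qed.

Lemma W_g (r : bool -> bool -> bool) n : (r false true + r true false = 1)%N -> r false false = false ->
  (2 * g r false (W n)).+1 = (3 ^ n)%N.
Proof.
move=> h12 h3; elim: n => [|n IH] /=; first by rewrite h3.
have [t ht] := W_cons n.
have gW : forall a, g r a (W n) = (r a false + g r false (W n))%N.
  by move=> a; rewrite ht /= h3.
rewrite !gcat !W_last /= (gW true) expnS -IH /=; lia.
Qed.

Lemma final (c n : nat) : (2 * c).+1 = (3 ^ n)%N ->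
  (c.+1)%:R / (3 ^ n)%:R = 1 / 2 + 1 / (2 * 3 ^+ n) :> rat.
Proof.
move=> h; rewrite -natrX -h.
have -> : (2 * c).+1 = (2 * c + 1)%N by lia.
rewrite natrD natrM -addn1 natrD.
field.
have : ((2 * c + 1)%:R : rat) != 0 by rewrite pnatr_eq0; lia.
by rewrite natrD natrM.
Qed.

Theorem lemma1 (n : nat) :
  d0 (W n ++ [:: true]) (true :: W n) = 1 / 2 + 1 / (2 * 3 ^+ n) :> rat /\
  d0 (true :: W n) (W n ++ [:: true]) = 1 / 2 + 1 / (2 * 3 ^+ n) :> rat.
Proof.
have [t ht] := W_cons n.
have e1 := @W_g (fun a x => a && ~~ x) n erefl erefl.
have e2 := @W_g (fun a x => ~~ a && x) n erefl erefl.
rewrite /d0; split.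
- rewrite (@cnt_zip _ _ (fun x y => ~~ x && y)); last by rewrite /= size_cat /= addn1.
  rewrite cnt_neg cats1 num1 -cats1 count_cat W_zeros /= addn0.
  rewrite W_gW //= addn0 add1n; exact: final.
- rewrite (@cnt_zip _ _ (fun x y => ~~ x && y)); last by rewrite /= size_cat /= addn1.
  rewrite cnt_neg cats1 num2 /= W_last /= W_zeros /=.
  rewrite W_gW //= add0n add0n addn1; exact: final.
Qed.
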